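(* Let $A$ be a finite set of agents and $(M_U)_{U\subseteq A}$ a dynamic network model on $A$, with associated full-information protocol complex functor $F:\Gamma\to\Gamma^{\mathrm{op}}\mathbf{Set}$ and its left Yoneda extension $F_!:\Gamma^{\mathrm{op}}\mathbf{Set}\to\Gamma^{\mathrm{op}}\mathbf{Set}$. Then there is a morphism of csets $\pi_X:F_!(X)\to X$ for every cset $X$, natural in $X$; in particular every cset $X$ carries an $F_!$-algebra structure $\pi_X:F_!(X)\to X$. (On a standard simplex, $\pi_{\Gamma[U]}:F(U)\to\Gamma[U]$ sends every $V$-simplex of $F(U)$ to the unique $V$-simplex of $\Gamma[U]$.)
   Context: $\Gamma$ is the poset category of subsets of $A$ ordered by inclusion, with unique morphism $\delta_{U,V}:U\to V$ when $U\subseteq V$. A cset (chromatic augmented semi-simplicial set) is a functor $X:\Gamma^{\mathrm{op}}\to\mathbf{Set}$; elements of $X(U)$ are called $U$-simplices and $\partial_{U,V}=X(\delta_{U,V}):X(V)\to X(U)$ are the face maps; morphisms of csets are natural transformations. $\Gamma[U]=\Gamma(-,U)$ is the representable cset: $\Gamma[U](T)$ is a singleton if $T\subseteq U$ and empty otherwise. For a functor $G:\Gamma\to\Gamma^{\mathrm{op}}\mathbf{Set}$, its left Yoneda extension $G_!$ is the (up to isomorphism unique) colimit-preserving functor $\Gamma^{\mathrm{op}}\mathbf{Set}\to\Gamma^{\mathrm{op}}\mathbf{Set}$ with $G_!(\Gamma[U])=G(U)$ naturally in $U$; explicitly $G_!(X)=\mathrm{colim}_{(U,x\in X(U))}G(U)$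 over the category of elements of $X$. A communication graph on a set $U$ is a directed graph $G\subseteq U\times U$; agent $a$ is active in $G$ if $(a,a)\in G$, and the view of an active agent $a$ is $\mathrm{view}_G(a)=\{b\mid (b,a)\in G\}$; $\mathrm{Active}(G)$ is the set of active agents. A dynamic network model is a family $(M_U)_{U\subseteq A}$ where each $M_U$ is a set of communication graphs on $U$. The full-information protocol complex functor $F$ is: $F(U)(V)=\emptyset$ if $V\not\subseteq U$; otherwise $F(U)(V)=\{\{(v,\mathrm{view}_G(v))\mid v\in V\}\mid G\in M_{U'}\text{ for some }U'\subseteq U,\ V\subseteq \mathrm{Active}(G)\}$; face maps $F(U)(\delta_{V,W})$ send $\{(w,\mathrm{view}_G(w))\mid w\in W\}$ to $\{(v,\mathrm{view}_G(v))\mid v\in V\}$; and for $U\subseteq T$, $F(\delta_{U,T}):F(U)\to F(T)$ is the evident inclusion $\{(v,\mathrm{view}_G(v))\}_{v\in V}\mapsto\{(v,\mathrm{view}_G(v))\}_{v\in V}$. *)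

(* Defs.v *)
From HB Require Import structures.
From mathcomp Require Import all_boot.
From Stdlib Require Import Relations FunctionalExtensionality
  PropExtensionality ProofIrrelevance.

Set Implicit Arguments.
Unset Strict Implicit.
Unset Printing Implicit Defensive.

Section Csets.
Variable A : finType.

(* Gamma = poset of subsets of A ({set A}); the unique morphism U -> V is a
   (proof-irrelevant, boolean) proof of U \subset V.
   A cset is a functor Gamma^op -> Set (Type-valued here). *)
Record cset := CSet {
  cs_obj :> {set A} -> Type;
  cs_face : forall U V : {set A}, U \subset V -> cs_obj V -> cs_obj U;
  cs_face_id : forall (U : {set A}) (h : U \subset U) x, cs_face h x = x;
  cs_face_comp : forall (U V W : {set A}) (h1 : U \subset V) (h2 : V \subset W)
      (h3 : U \subset W) x, cs_face h1 (cs_face h2 x) = cs_face h3 x }.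

Record hom (X Y : cset) := Hom {
  hom_fun :> forall U, X U -> Y U;
  hom_nat : forall (U V : {set A}) (h : U \subset V) (x : X V),
      hom_fun (cs_face h x) = cs_face h (hom_fun x) }.

Record cfunctor := CFun {
  cf_obj :> {set A} -> cset;
  cf_map : forall U T : {set A}, U \subset T -> hom (cf_obj U) (cf_obj T);
  cf_map_id : forall (U : {set A}) (h : U \subset U) V x, cf_map h V x = x;
  cf_map_comp : forall (U T S : {set A}) (h1 : U \subset T) (h2 : T \subset S)
      (h3 : U \subset S) V x, cf_map h2 V (cf_map h1 V x) = cf_map h3 V x }.

Section Lan.
Variable G : cfunctor.

Section Obj.
Variable X : cset.

(* pre-elements of colim_{(U, x in X U)} G(U)(V) *)
Definition pre (V : {set A}) := {U : {set A} & (X U * G U V)%type}.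

Definition step V : relation (pre V) := fun p q =>
  exists (U T : {set A}) (h : U \subset T) (x : X T) (s : G U V),
    p = existT _ U (cs_face h x, s) /\ q = existT _ T (x, cf_map G h V s).

Definition Req V := clos_refl_sym_trans (pre V) (@step V).

Definition Lobj (V : {set A}) :=
  {P : pre V -> Prop | exists p, forall q, P q <-> Req p q}.

Definition preface (V W : {set A}) (h : V \subset W) (p : pre W) : pre V :=
  let: existT U (x, s) := p in existT _ U (x, cs_face h s).

Lemma Req_face (V W : {set A}) (h : V \subset W) p q :
  Req p q -> Req (preface h p) (preface h q).
Proof.
elim=> [{}p {}q [U [T [h' [x [s [-> ->]]]]]]| {}p | {}p {}q _ IH | p1 p2 p3 _ IH1 _ IH2].
- apply: rst_step; exists U, T, h', x, (cs_face h s); split=> //=.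
  by rewrite hom_nat.
- exact: rst_refl.
- exact: rst_sym.
- exact: rst_trans IH2.
Qed.

Lemma Lface_proof (V W : {set A}) (h : V \subset W) (z : Lobj W) :
  exists p, forall q,
    (exists p', proj1_sig z p' /\ Req (preface h p') q) <-> Req p q.
Proof.
case: z => P [p0 Hp0] /=; exists (preface h p0) => q; split.
- case=> p' [/Hp0 H1 H2]; apply: rst_trans H2; exact: Req_face.
- by move=> H; exists p0; split=> //; apply/Hp0; apply: rst_refl.
Qed.

Definition Lface (V W : {set A}) (h : V \subset W) (z : Lobj W) : Lobj V :=
  exist _ (fun q => exists p', proj1_sig z p' /\ Req (preface h p') q)
    (Lface_proof h z).

Lemma Lobj_eq (V : {set A}) (z z' : Lobj V) :
  (forall q, proj1_sig z q <-> proj1_sig z' q) -> z = z'.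
Proof.
case: z => P HP; case: z' => P' HP' /= H.
have E : P = P'.
  by apply: functional_extensionality => q; apply: propositional_extensionality.
subst P'; f_equal; exact: proof_irrelevance.
Qed.

Lemma class_closed (V : {set A}) (z : Lobj V) p q :
  proj1_sig z p -> Req p q -> proj1_sig z q.
Proof.
case: z => P [p0 H] /= Hp Hpq; apply/H; apply/rst_trans/Hpq; exact/H.
Qed.

Lemma preface_id (V : {set A}) (h : V \subset V) p : preface h p = p.
Proof. by case: p => U [x s] /=; rewrite cs_face_id. Qed.

Lemma preface_comp (U V W : {set A}) (h1 : U \subset V) (h2 : V \subset W)
   (h3 : U \subset W) p : preface h1 (preface h2 p) = preface h3 p.
Proof. by case: p => T [x s] /=; rewrite cs_face_comp. Qed.

Lemma Lface_id (V : {set A}) (h : V \subset V) z : Lface h z = z.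
Proof.
apply: Lobj_eq => q /=; split.
- by case=> p [Hp]; rewrite preface_id; apply: class_closed.
- by move=> Hq; exists q; rewrite preface_id; split=> //; apply: rst_refl.
Qed.

Lemma Lface_comp (U V W : {set A}) (h1 : U \subset V) (h2 : V \subset W)
   (h3 : U \subset W) z : Lface h1 (Lface h2 z) = Lface h3 z.
Proof.
apply: Lobj_eq => q /=; split.
- case=> p2 [[p1 [Hp1 H12]] H2q]; exists p1; split=> //.
  rewrite -(preface_comp h1 h2); apply: rst_trans H2q; exact: Req_face.
- case=> p [Hp Hq]; exists (preface h2 p); split.
    by exists p; split=> //; apply: rst_refl.
  by rewrite preface_comp.
Qed.

Definition Lan : cset := CSet Lface_id Lface_comp.

End Obj.

Section Map.
Variables (X Y : cset) (g : hom X Y).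

Definition premap (V : {set A}) (p : pre X V) : pre Y V :=
  let: existT U (x, s) := p in existT _ U (g U x, s).

Lemma Req_map (V : {set A}) (p q : pre X V) : Req p q -> Req (premap p) (premap q).
Proof.
elim=> [{}p {}q [U [T [h' [x [s [-> ->]]]]]]| {}p | {}p {}q _ IH | p1 p2 p3 _ IH1 _ IH2].
- apply: rst_step; exists U, T, h', (g T x), s; split=> //=.
  by rewrite hom_nat.
- exact: rst_refl.
- exact: rst_sym.
- exact: rst_trans IH2.
Qed.

Lemma Lmap_proof (V : {set A}) (z : Lobj X V) :
  exists p, forall q,
    (exists p', proj1_sig z p' /\ Req (premap p') q) <-> Req p q.
Proof.
case: z => P [p0 Hp0] /=; exists (premap p0) => q; split.
- case=> p' [/Hp0 H1 H2]; apply: rst_trans H2; exact: Req_map.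
- by move=> H; exists p0; split=> //; apply/Hp0; apply: rst_refl.
Qed.

Definition Lmap (V : {set A}) (z : Lobj X V) : Lobj Y V :=
  exist _ (fun q => exists p', proj1_sig z p' /\ Req (premap p') q)
    (Lmap_proof z).

Lemma Lmap_nat (U V : {set A}) (h : U \subset V) (z : Lobj X V) :
  Lmap (Lface h z) = Lface h (Lmap z).
Proof.
apply: Lobj_eq => q /=; split.
- case=> p2 [[p1 [Hp1 H12]] H2q]; exists (premap p1); split.
    by exists p1; split=> //; apply: rst_refl.
  apply: rst_trans H2q; have -> : preface h (premap p1) = premap (preface h p1).
    by case: p1 {Hp1 H12} => T [x s].
  exact: Req_map.
- case=> p2 [[p1 [Hp1 H12]] H2q]; exists (preface h p1); split.
    by exists p1; split=> //; apply: rst_refl.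
  apply: rst_trans H2q; have -> : premap (preface h p1) = preface h (premap p1).
    by case: p1 {Hp1 H12} => T [x s].
  exact: Req_face.
Qed.

Definition Lhom : hom (Lan X) (Lan Y) := @Hom (Lan X) (Lan Y) Lmap Lmap_nat.

End Map.
End Lan.

Definition active (G : {set A * A}) : {set A} := [set a | (a, a) \in G].
Definition view (G : {set A * A}) (a : A) : {set A} := [set b | (b, a) \in G].

Definition views (G : {set A * A}) (V : {set A}) : {set A * {set A}} :=
  [set (v, view G v) | v in V].

Definition restrict (V : {set A}) (f : {set A * {set A}}) : {set A * {set A}} :=
  [set p in f | p.1 \in V].

Section F.
Variable M : {set A} -> {set {set A * A}}.

(* f is a V-simplex of F(U) *)
Definition inF (U V : {set A}) (f : {set A * {set A}}) : bool :=
  (V \subset U) &&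
  [exists U' : {set A}, exists G : {set A * A},
     [&& U' \subset U, G \in M U', V \subset active G & f == views G V]].

Definition Fsimp (U V : {set A}) := {f : {set A * {set A}} | inF U V f}.

Lemma restrict_views (G : {set A * A}) (V W : {set A}) : V \subset W ->
  restrict V (views G W) = views G V.
Proof.
move=> sVW; apply/setP => p; rewrite !inE.
apply/andP/imsetP.
- by case=> /imsetP [v vW ->] /= vV; exists v.
- case=> v vV ->; split=> //; apply/imsetP; exists v => //; exact: (subsetP sVW).
Qed.

Lemma inF_restrict (U V W : {set A}) f : V \subset W -> inF U W f -> inF U V (restrict V f).
Proof.
move=> sVW /andP [sWU /existsP [U' /existsP [G /and4P [sU'U GM sWa /eqP ->]]]].
apply/andP; split; first exact: subset_trans sWU.
apply/existsP; exists U'; apply/existsP; exists G.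
by rewrite sU'U GM (subset_trans sVW sWa) (restrict_views _ sVW) eqxx.
Qed.

Lemma inF_mono (U T V : {set A}) f : U \subset T -> inF U V f -> inF T V f.
Proof.
move=> sUT /andP [sVU /existsP [U' /existsP [G /and4P [sU'U GM sVa Ef]]]].
apply/andP; split; first exact: subset_trans sUT.
apply/existsP; exists U'; apply/existsP; exists G.
by rewrite (subset_trans sU'U sUT) GM sVa Ef.
Qed.

Definition Fface (U V W : {set A}) (h : V \subset W) (s : Fsimp U W) : Fsimp U V :=
  exist _ (restrict V (val s)) (inF_restrict h (valP s)).

Lemma Fface_id (U V : {set A}) (h : V \subset V) s : Fface h s = s :> Fsimp U V.
Proof.
apply: val_inj => /=; case: s => f /= /andP [_ /existsP [U' /existsP [G /and4P [_ _ _ /eqP ->]]]].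
exact: restrict_views.
Qed.

Lemma Fface_comp (U V W Z : {set A}) (h1 : V \subset W) (h2 : W \subset Z) (h3 : V \subset Z) s :
  Fface h1 (Fface h2 s) = Fface h3 s :> Fsimp U V.
Proof.
apply: val_inj => /=; apply/setP => p; rewrite !inE.
case: (p.1 \in V) (subsetP h1 p.1) => [->|] //; by rewrite ?andbT ?andbF.
Qed.

Definition Fobj (U : {set A}) : cset := CSet (@Fface_id U) (@Fface_comp U).

Definition Fincl (U T : {set A}) (h : U \subset T) (V : {set A}) (s : Fsimp U V) : Fsimp T V :=
  exist _ (val s) (inF_mono h (valP s)).

Lemma Fincl_nat (U T : {set A}) (h : U \subset T) (V W : {set A}) (h' : V \subset W) (s : Fsimp U W) :
  Fincl h (Fface h' s) = Fface h' (Fincl h s).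
Proof. exact: val_inj. Qed.

Definition Fmap (U T : {set A}) (h : U \subset T) : hom (Fobj U) (Fobj T) :=
  @Hom (Fobj U) (Fobj T) (Fincl h) (Fincl_nat h).

Lemma Fmap_id (U : {set A}) (h : U \subset U) V x : Fmap h V x = x.
Proof. exact: val_inj. Qed.

Lemma Fmap_comp (U T S : {set A}) (h1 : U \subset T) (h2 : T \subset S) (h3 : U \subset S) V x :
  Fmap h2 V (Fmap h1 V x) = Fmap h3 V x.
Proof. exact: val_inj. Qed.

Definition Fpc : cfunctor := CFun Fmap_id Fmap_comp.

End F.
End Csets.

(* Main.v *)
Require Import Defs.
From mathcomp Require Import all_boot.
From Stdlib Require Import Relations ClassicalEpsilon.

Set Implicit Arguments.
Unset Strict Implicit.

Section P.
Variables (A : finType) (M : {set A} -> {set {set A * A}}).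

Lemma Fsub (U V : {set A}) (s : Fsimp M U V) : V \subset U.
Proof. by case: s => f /= /andP []. Qed.

Definition pe (X : cset A) (V : {set A}) (p : pre (Fpc M) X V) : X V :=
  let: existT U (x, s) := p in cs_face (Fsub s) x.

Lemma face_irr (X : cset A) (U V : {set A}) (h1 h2 : U \subset V) (x : X V) :
  cs_face h1 x = cs_face h2 x.
Proof. by rewrite (bool_irrelevance h1 h2). Qed.

Lemma pe_Req (X : cset A) V (p q : pre (Fpc M) X V) : Req p q -> pe p = pe q.
Proof.
elim=> [{}p {}q [U [T [h' [x [s [-> ->]]]]]]| {}p | {}p {}q _ IH | p1 p2 p3 _ IH1 _ IH2] //.
- rewrite /= (cs_face_comp _ _ (subset_trans (Fsub s) h')); exact: face_irr.
- by rewrite IH1.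
Qed.

Definition pi_fun (X : cset A) (V : {set A}) (z : Lan (Fpc M) X V) : X V :=
  pe (proj1_sig (constructive_indefinite_description _ (proj2_sig z))).

Lemma pi_funE (X : cset A) V (z : Lan (Fpc M) X V) p :
  proj1_sig z p -> pi_fun z = pe p.
Proof.
move=> Hp; rewrite /pi_fun.
case: (constructive_indefinite_description _ _) => p0 H /=.
apply: pe_Req; exact/H.
Qed.

Lemma rep (X : cset A) V (z : Lan (Fpc M) X V) : exists p, proj1_sig z p.
Proof. case: z => P [p H]; exists p; apply/H; exact: rst_refl. Qed.

Lemma pi_nat (X : cset A) (U V : {set A}) (h : U \subset V) (z : Lan (Fpc M) X V) :
  pi_fun (cs_face h z) = cs_face h (pi_fun z).
Proof.
have [p Hp] := rep z.
rewrite (pi_funE Hp) (@pi_funE _ _ _ (preface h p)); last first.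
  by exists p; split=> //; apply: rst_refl.
case: p {Hp} => T [x s] /=.
rewrite (cs_face_comp _ _ (subset_trans h (Fsub s))); exact: face_irr.
Qed.

Definition pi (X : cset A) : hom (Lan (Fpc M) X) X := Hom (@pi_nat X).

End P.

Theorem proposition1 (A : finType) (M : {set A} -> {set {set A * A}})
  (HM : forall (U : {set A}) (G : {set A * A}), G \in M U -> G \subset setX U U) :
  exists pi : forall X : cset A, hom (Lan (Fpc M) X) X,
    forall (X Y : cset A) (g : hom X Y) (V : {set A}) (z : Lan (Fpc M) X V),
      g V (pi X V z) = pi Y V (Lhom (Fpc M) g V z).
Proof.
exists (@pi A M) => X Y g V z /=.
have [p Hp] := rep z.
rewrite (pi_funE Hp) (@pi_funE _ _ _ _ _ (premap g p)); last first.
  by exists p; split=> //; apply: rst_refl.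
case: p {Hp} => T [x s] /=.
by rewrite hom_nat.
Qed.
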